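(* Let $\varpi:\mathbb R\to\mathbb R$ be such that $e^{i\varpi}$ is continuous and $1$-periodic, let $K\in\mathbb Z$ and $\alpha\in\mathbb R$. Let $C_{per}$ be the space of continuous $1$-periodic functions with the uniform norm, and define $\lambda_{\alpha,K}:C_{per}\to C_{per}$ by $(\lambda_{\alpha,K}\Phi)(x)=\tilde\Phi_\alpha(x)e^{-2Ki\varpi(x)}$, where $Q_\alpha(x)=\int_0^x\Phi(t)e^{i\alpha t}dt$ and $\tilde\Phi_\alpha(x)=-iQ_\alpha(x)e^{-i\alpha x}(1-e^{i\alpha})+iQ_\alpha(1)e^{-i\alpha x}$. Then the operator norm satisfies $\|\lambda_{\alpha,K}\|\le2$.
   Context: In the paper $\varpi(x)=\mathrm{Arg}\,p(x)$, where $p(x)e^{ikx}$ is a Floquet solution of a periodic Schrödinger equation. *)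

(* Defs.v *)
From Stdlib Require Import Reals ZArith.
From Coquelicot Require Import Coquelicot.
Open Scope R_scope.

Definition cis (t : R) : C := (cos t, sin t).

Definition Q_alpha (Phi : R -> C) (alpha x : R) : C :=
  RInt (V := C_R_CompleteNormedModule)
       (fun t => Cmult (Phi t) (cis (alpha * t))) 0 x.

Definition Phi_tilde (Phi : R -> C) (alpha x : R) : C :=
  Cplus
    (Cmult (Cmult (Cmult (Copp Ci) (Q_alpha Phi alpha x)) (cis (- (alpha * x))))
           (Cminus (RtoC 1) (cis alpha)))
    (Cmult (Cmult Ci (Q_alpha Phi alpha 1)) (cis (- (alpha * x)))).

Definition lambda_op (varpi : R -> R) (alpha : R) (K : Z) (Phi : R -> C) (x : R) : C :=
  Cmult (Phi_tilde Phi alpha x) (cis (- (2 * IZR K * varpi x))).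

(* Main.v *)
Require Import Defs.
From Stdlib Require Import Reals ZArith Lra.
From Coquelicot Require Import Coquelicot.
Open Scope R_scope.

Lemma is_RInt_Cmult (f : R -> C) a b (l c : C) :
  is_RInt (V := C_R_NormedModule) f a b l ->
  is_RInt (V := C_R_NormedModule) (fun t => Cmult c (f t)) a b (Cmult c l).
Proof.
  intros H.
  assert (H1 : is_RInt (V:=R_NormedModule) (fun t => fst (f t)) a b (fst l))
    by exact (is_RInt_fct_extend_fst (U:=R_NormedModule) (V:=R_NormedModule) f a b l H).
  assert (H2 : is_RInt (V:=R_NormedModule) (fun t => snd (f t)) a b (snd l))
    by exact (is_RInt_fct_extend_snd (U:=R_NormedModule) (V:=R_NormedModule) f a b l H).
  destruct c as [c1 c2]. destruct l as [l1 l2].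
  apply (is_RInt_fct_extend_pair (U:=R_NormedModule) (V:=R_NormedModule)).
  - simpl.
    eapply is_RInt_ext; [| apply (is_RInt_minus _ _ _ _ _ _ (is_RInt_scal _ _ _ c1 _ H1) (is_RInt_scal _ _ _ c2 _ H2))].
    intros x _. simpl. unfold minus, plus, opp, scal; simpl.
    unfold mult; simpl. ring.
  - simpl.
    eapply is_RInt_ext; [| apply (is_RInt_plus _ _ _ _ _ _ (is_RInt_scal _ _ _ c1 _ H2) (is_RInt_scal _ _ _ c2 _ H1))].
    intros x _. simpl. unfold plus, scal; simpl.
    unfold mult; simpl. ring.
Qed.

Lemma cont_fst (Phi : R -> C) x : continuous Phi x -> continuity_pt (fun t => fst (Phi t)) x.
Proof.
  intros H. apply continuity_pt_filterlim.
  apply (continuous_comp Phi fst x H). destruct (Phi x). apply continuous_fst.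
Qed.
Lemma cont_snd (Phi : R -> C) x : continuous Phi x -> continuity_pt (fun t => snd (Phi t)) x.
Proof.
  intros H. apply continuity_pt_filterlim.
  apply (continuous_comp Phi snd x H). destruct (Phi x). apply continuous_snd.
Qed.

Lemma ex_RInt_g (Phi : R -> C) alpha a b :
  (forall x, continuous Phi x) ->
  ex_RInt (V := C_R_NormedModule) (fun t => Cmult (Phi t) (cis (alpha * t))) a b.
Proof.
  intros HC.
  assert (Hc : forall x, continuity_pt (fun t => cos (alpha * t)) x).
  { intros x. apply continuity_pt_comp with (f1 := fun t => alpha * t).
    reg. apply continuity_cos. }
  assert (Hs : forall x, continuity_pt (fun t => sin (alpha * t)) x).
  { intros x. apply continuity_pt_comp with (f1 := fun t => alpha * t).
    reg. apply continuity_sin. }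
  destruct (ex_RInt_continuous (V:=R_CompleteNormedModule)
     (fun t => fst (Phi t) * cos (alpha * t) - snd (Phi t) * sin (alpha * t)) a b) as [l1 H1].
  { intros z _. apply continuity_pt_filterlim.
    apply continuity_pt_minus; apply continuity_pt_mult; auto using cont_fst, cont_snd. }
  destruct (ex_RInt_continuous (V:=R_CompleteNormedModule)
     (fun t => fst (Phi t) * sin (alpha * t) + snd (Phi t) * cos (alpha * t)) a b) as [l2 H2].
  { intros z _. apply continuity_pt_filterlim.
    apply continuity_pt_plus; apply continuity_pt_mult; auto using cont_fst, cont_snd. }
  exists (l1, l2).
  apply (is_RInt_fct_extend_pair (U:=R_NormedModule) (V:=R_NormedModule)).
  - eapply is_RInt_ext; [|exact H1]. intros x _. unfold cis. destruct (Phi x). simpl. ring.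
  - eapply is_RInt_ext; [|exact H2]. intros x _. unfold cis. destruct (Phi x). simpl. ring.
Qed.

Lemma Cmod_RInt_le (g : R -> C) a b (z : C) M :
  a <= b -> 0 <= M -> (forall t, Cmod (g t) <= M) ->
  is_RInt (V := C_R_NormedModule) g a b z -> Cmod z <= (b - a) * M.
Proof.
  intros Hab HM Hg Hz.
  destruct (Ceq_dec z 0) as [E|E].
  { subst. rewrite Cmod_0. nra. }
  set (u := Cmult (RtoC (Cmod z)) (Cinv z)).
  assert (Hu : Cmod u = 1).
  { unfold u. rewrite Cmod_mult, Cmod_inv by exact E. rewrite Cmod_R, Rabs_pos_eq by apply Cmod_ge_0.
    apply Rinv_r. intro H0. apply E, Cmod_eq_0, H0. }
  assert (Huz : Cmult u z = RtoC (Cmod z)).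
  { unfold u. rewrite <- Cmult_assoc, Cinv_l by exact E. apply Cmult_1_r. }
  pose proof (is_RInt_Cmult g a b z u Hz) as H1.
  rewrite Huz in H1.
  pose proof (is_RInt_fct_extend_fst (U:=R_NormedModule) (V:=R_NormedModule) _ a b _ H1) as H2.
  assert (H3 := norm_RInt_le (V:=R_NormedModule) (fun t => fst (Cmult u (g t))) (fun _ => M) a b
     (Cmod z) (scal (b - a) M) Hab).
  assert (H4 : norm (Cmod z) <= scal (b - a) M).
  { apply H3. 2: exact H2. 2: exact (is_RInt_const (V:=R_NormedModule) a b M).
    intros t _. eapply Rle_trans. apply re_le_Cmod.
    rewrite Cmod_mult, Hu, Rmult_1_l. apply Hg. }
  unfold norm, scal in H4; simpl in H4. unfold abs, mult in H4; simpl in H4.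
  eapply Rle_trans; [apply Rle_abs|exact H4].
Qed.

Lemma shift (Phi : R -> C) alpha x :
  (forall x, continuous Phi x) -> (forall x, Phi (x + 1) = Phi x) ->
  is_RInt (V := C_R_NormedModule) (fun t => Cmult (Phi t) (cis (alpha * t))) 1 (x + 1)
    (Cmult (cis alpha) (Q_alpha Phi alpha x)).
Proof.
  intros HC HP.
  set (g := fun t => Cmult (Phi t) (cis (alpha * t))).
  assert (H0 := RInt_correct (V:=C_R_CompleteNormedModule) g 0 x (ex_RInt_g Phi alpha 0 x HC)).
  assert (H1 := is_RInt_Cmult g 0 x _ (cis alpha) H0).
  assert (H2 : is_RInt (V:=C_R_NormedModule) (fun s => g (s + 1)) (1 * 1 + -1) (1 * (x+1) + -1)
      (Cmult (cis alpha) (Q_alpha Phi alpha x))).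
  { replace (1 * 1 + -1) with 0 by ring. replace (1 * (x+1) + -1) with x by ring.
    eapply is_RInt_ext; [|exact H1]. intros t _. unfold g. rewrite HP.
    unfold cis. destruct (Phi t) as [p1 p2].
    replace (alpha * (t + 1)) with (alpha * t + alpha) by ring.
    rewrite cos_plus, sin_plus.
    apply injective_projections; simpl; ring. }
  assert (H3 := is_RInt_comp_lin (V:=C_R_NormedModule) _ 1 (-1) 1 (x+1) _ H2).
  eapply is_RInt_ext; [|exact H3]. intros t _. simpl.
  replace (1 * t + -1 + 1) with t by ring.
  apply (scal_one (V:=C_R_NormedModule)).
Qed.

Lemma Cmod_cis t : Cmod (cis t) = 1.
Proof.
  unfold Cmod, cis; simpl. rewrite !Rmult_1_r.
  rewrite <- sqrt_1. f_equal. rewrite Rplus_comm. apply sin2_cos2.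
Qed.

Theorem lemma2p4 (varpi : R -> R) (K : Z) (alpha : R)
  (Hcont : forall x, continuous (fun y => cis (varpi y)) x)
  (Hper : forall x, cis (varpi (x + 1)) = cis (varpi x)) :
  forall (Phi : R -> C),
    (forall x, continuous Phi x) ->
    (forall x, Phi (x + 1) = Phi x) ->
    forall M : R, (forall t, Cmod (Phi t) <= M) ->
    forall x, Cmod (lambda_op varpi alpha K Phi x) <= 2 * M.
Proof.
  intros Phi HC HP M HB x.
  assert (HM : 0 <= M) by (eapply Rle_trans; [apply Cmod_ge_0 | apply (HB 0)]).
  set (g := fun t => Cmult (Phi t) (cis (alpha * t))).
  assert (Ex : forall a b, ex_RInt (V:=C_R_CompleteNormedModule) g a b)
    by (intros; apply ex_RInt_g; exact HC).
  assert (E1 : Cplus (Q_alpha Phi alpha x) (RInt (V:=C_R_CompleteNormedModule) g x 1) = Q_alpha Phi alpha 1)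
    by exact (RInt_Chasles (V:=C_R_CompleteNormedModule) g 0 x 1 (Ex _ _) (Ex _ _)).
  assert (E2 : Cplus (RInt (V:=C_R_CompleteNormedModule) g x 1) (RInt (V:=C_R_CompleteNormedModule) g 1 (x+1))
               = RInt (V:=C_R_CompleteNormedModule) g x (x+1))
    by exact (RInt_Chasles (V:=C_R_CompleteNormedModule) g x 1 (x+1) (Ex _ _) (Ex _ _)).
  assert (E3 : RInt (V:=C_R_CompleteNormedModule) g 1 (x+1) = Cmult (cis alpha) (Q_alpha Phi alpha x))
    by exact (is_RInt_unique (V:=C_R_CompleteNormedModule) _ _ _ _ (shift Phi alpha x HC HP)).
  assert (Bz : Cmod (RInt (V:=C_R_CompleteNormedModule) g x (x+1)) <= (x + 1 - x) * M).
  { apply (Cmod_RInt_le g); try lra. intros t. unfold g. rewrite Cmod_mult, Cmod_cis, Rmult_1_r. apply HB.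
    exact (RInt_correct (V:=C_R_CompleteNormedModule) _ _ _ (Ex _ _)). }
  assert (Eq : lambda_op varpi alpha K Phi x =
     Cmult (Cmult (Cmult Ci (cis (- (alpha * x)))) (RInt (V:=C_R_CompleteNormedModule) g x (x+1)))
           (cis (- (2 * IZR K * varpi x)))).
  { unfold lambda_op, Phi_tilde. rewrite <- E1, <- E2, E3.
    destruct (Q_alpha Phi alpha x) as [q1 q2].
    destruct (RInt (V:=C_R_CompleteNormedModule) g x 1) as [a1 a2].
    destruct (cis alpha) as [c1 c2]. destruct (cis (- (alpha * x))) as [e1 e2].
    destruct (cis (- (2 * IZR K * varpi x))) as [f1 f2].
    apply injective_projections; simpl; ring. }
  rewrite Eq, !Cmod_mult, Cmod_Ci, !Cmod_cis. lra.
Qed.
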